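(* Let $\tau$ be a graph on a closed oriented surface which lifts to a triangulation of the universal cover, let $E$ be its set of edges, let $\mathbf{c}:E\to\mathbb{R}$, and let $v$ be a vertex of $\tau$ of valence $m$. With $x_i$, $A_i$, $W_j=\begin{pmatrix}a_j&b_j\\c_j&d_j\end{pmatrix}$ as in the context, the following are equivalent: (A) $W_m=-I$, and $a_j<0$, $c_j<0$, $b_j>0$, $d_j>0$ for $1\le j\le m-1$ except that $a_1=0$ and $d_{m-1}=0$; (B) $W_m=-I$, and $a_j\le 0$, $c_j\le 0$, $b_j\ge 0$, $d_j\ge 0$ for $1\le j\le m-1$ except that $a_1=0$ and $d_{m-1}=0$.
   Context: List the edge-ends incident to $v$ in clockwise order (with respect to the orientation of the surface) as $e_1,\dots,e_m$, an edge with both endpoints at $v$ contributing two entries. Set $x_i=\mathbf{c}(e_i)$, $A_i=\begin{pmatrix}0&1\\-1&x_i\end{pmatrix}$, $W_j=A_1A_2\cdots A_j=\begin{pmatrix}a_j&b_j\\c_j&d_j\end{pmatrix}$ for $j=1,\dots,m$, and $I$ is the $2\times2$ identity matrix. In both (A) and (B), the phrase ''except that $a_1=0$ and $d_{m-1}=0$'' means the sign conditions are not imposed on $a_1$ and $d_{m-1}$, which equal $0$. *)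

(* Defs.v *)
From mathcomp Require Import all_boot all_order all_algebra.
Set Implicit Arguments. Unset Strict Implicit. Unset Printing Implicit Defensive.
Import Order.TTheory GRing.Theory Num.Theory.
Local Open Scope ring_scope.

Definition Amx (R : ringType) (x : R) : 'M[R]_2 :=
  \matrix_(i < 2, j < 2)
    (if (i == 0 :> nat) then (if (j == 0 :> nat) then 0 else 1)
     else (if (j == 0 :> nat) then -1 else x)).

Definition Wmx (R : ringType) (x : nat -> R) (j : nat) : 'M[R]_2 :=
  \prod_(1 <= i < j.+1) Amx (x i).

Definition entry_a (R : ringType) (M : 'M[R]_2) : R := M 0 0.
Definition entry_b (R : ringType) (M : 'M[R]_2) : R := M 0 1.
Definition entry_c (R : ringType) (M : 'M[R]_2) : R := M 1 0.
Definition entry_d (R : ringType) (M : 'M[R]_2) : R := M 1 1.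

(* Main.v *)
Require Import Defs.
From mathcomp Require Import all_boot all_order all_algebra.
From mathcomp Require Import ring lra.
Import Order.TTheory GRing.Theory Num.Theory.
Local Open Scope ring_scope.

Section Aux.
Variable (R : realFieldType) (x : nat -> R).

Lemma Wstep j : Wmx x j.+1 = Wmx x j *m Amx (x j.+1).
Proof. by rewrite /Wmx big_nat_recr. Qed.

Lemma Wrec j :
  [/\ entry_a (Wmx x j.+1) = - entry_b (Wmx x j),
      entry_b (Wmx x j.+1) = entry_a (Wmx x j) + entry_b (Wmx x j) * x j.+1,
      entry_c (Wmx x j.+1) = - entry_d (Wmx x j) &
      entry_d (Wmx x j.+1) = entry_c (Wmx x j) + entry_d (Wmx x j) * x j.+1].
Proof.
rewrite Wstep /entry_a /entry_b /entry_c /entry_d.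
rewrite !mxE !big_ord_recl !big_ord0 !mxE /=.
have -> : lift ord0 ord0 = 1 :> 'I_2 by apply/val_inj.
have -> : ord0 = 0 :> 'I_2 by apply/val_inj.
by split; ring.
Qed.

Lemma W0 : entry_a (Wmx x 0) = 1 /\ entry_b (Wmx x 0) = 0 /\
           entry_c (Wmx x 0) = 0 /\ entry_d (Wmx x 0) = 1.
Proof.
by rewrite /Wmx big_geq // /entry_a /entry_b /entry_c /entry_d !mxE.
Qed.

Lemma Wdet j : entry_a (Wmx x j) * entry_d (Wmx x j)
             - entry_b (Wmx x j) * entry_c (Wmx x j) = 1.
Proof.
elim: j => [|j IH].
  by have [-> [-> [-> ->]]] := W0; ring.
have [-> -> -> ->] := Wrec j.
by rewrite -IH; ring.
Qed.
End Aux.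

Lemma aux1 (R : realFieldType) (a b c d : R) :
  a <= 0 -> 0 <= d -> a * d - b * c = 1 -> b = 0 -> False.
Proof.
move=> Ha Hd H Hb; rewrite Hb mul0r subr0 in H.
have := mulr_le0_ge0 Ha Hd; rewrite H; lra.
Qed.

Lemma aux2 (R : realFieldType) (a b c d y : R) :
  c <= 0 -> 0 <= c + d * y -> a * d - b * c = 1 -> d = 0 -> False.
Proof.
move=> Hc Hd H H0; rewrite H0 mul0r addr0 in Hd.
have c0 : c = 0 by apply/le_anti; rewrite Hc Hd.
by move: H; rewrite c0 H0 !mulr0 subr0 => /eqP; rewrite eq_sym oner_eq0.
Qed.


Theorem lemma3p1 (R : realFieldType) (m : nat) (x : nat -> R) :
  (Wmx x m = - 1%:M /\
   forall j : nat, (1 <= j <= m.-1)%N ->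
     (if j == 1%N then entry_a (Wmx x j) = 0 else entry_a (Wmx x j) < 0) /\
     entry_c (Wmx x j) < 0 /\
     entry_b (Wmx x j) > 0 /\
     (if j == m.-1 then entry_d (Wmx x j) = 0 else entry_d (Wmx x j) > 0))
  <->
  (Wmx x m = - 1%:M /\
   forall j : nat, (1 <= j <= m.-1)%N ->
     (if j == 1%N then entry_a (Wmx x j) = 0 else entry_a (Wmx x j) <= 0) /\
     entry_c (Wmx x j) <= 0 /\
     entry_b (Wmx x j) >= 0 /\
     (if j == m.-1 then entry_d (Wmx x j) = 0 else entry_d (Wmx x j) >= 0)).
Proof.
split.
  move=> [HW H]; split => // j Hj.
  have [Ha [Hc [Hb Hd]]] := H j Hj.
  split; first by case: (j == 1%N) Ha => //; apply: ltW.
  split; first exact: ltW.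
  split; first exact: ltW.
  by case: (j == m.-1) Hd => //; apply: ltW.
move=> [HW H]; split => //.
have Hle : forall k, (1 <= k <= m.-1)%N ->
   entry_a (Wmx x k) <= 0 /\ entry_c (Wmx x k) <= 0 /\
   entry_b (Wmx x k) >= 0 /\ entry_d (Wmx x k) >= 0.
  move=> k Hk; have [Ha [Hc [Hb Hd]]] := H k Hk.
  split; first by case: (k == 1%N) Ha => // ->.
  do 2 (split => //).
  by case: (k == m.-1) Hd => // ->.
have bpos : forall k, (1 <= k <= m.-1)%N -> entry_b (Wmx x k) > 0.
  move=> k Hk; have [Ha [Hc [Hb Hd]]] := Hle k Hk.
  have Hdet := Wdet _ x k.
  rewrite lt_neqAle Hb andbT; apply/eqP => Hb0.
  exact: (@aux1 _ _ _ _ _ Ha Hd Hdet (esym Hb0)).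
have dpos : forall k, (1 <= k)%N -> (k < m.-1)%N -> entry_d (Wmx x k) > 0.
  move=> k Hk1 Hk2.
  have Hk : (1 <= k <= m.-1)%N by rewrite Hk1 ltnW.
  have Hk' : (1 <= k.+1 <= m.-1)%N by rewrite Hk2.
  have [Ha [Hc [Hb Hd]]] := Hle k Hk.
  have [_ [_ [_ Hd']]] := Hle k.+1 Hk'.
  have [_ _ _ Hdr] := Wrec _ x k.
  have Hdet := Wdet _ x k.
  rewrite lt_neqAle Hd andbT; apply/eqP => Hd0.
  rewrite Hdr in Hd'; exact: (@aux2 _ _ _ _ _ _ Hc Hd' Hdet (esym Hd0)).
move=> j Hj; have [Ha [_ [_ Hd]]] := H j Hj.
case/andP: Hj => Hj1 Hj2.
split.
  case: eqP Ha => // Hne _.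
  clear Hd.
  case: j Hj1 Hj2 Hne => [|j] // Hj1 Hj2 Hne.
  have [-> _ _ _] := Wrec _ x j.
  rewrite oppr_lt0; apply: bpos.
  rewrite (leq_trans (leqnSn j) Hj2) andbT.
  by case: j Hne {Hj1 Hj2}.
split.
  clear Ha Hd.
  case: j Hj1 Hj2 => [|j] // Hj1 Hj2.
  have [_ _ -> _] := Wrec _ x j.
  rewrite oppr_lt0.
  case: j Hj1 Hj2 => [|j] _ Hj2.
    by have [_ [_ [_ ->]]] := W0 _ x; apply: ltr01.
  by apply: dpos.
split; first by apply: bpos; rewrite Hj1.
case: eqP Hd => // Hne _.
apply: dpos => //.
by rewrite ltn_neqAle Hj2 andbT; apply/eqP.
Qed.
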